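(* Let $D$ be a square-free integer, let $\mathbb{Z}[\sqrt{D}]$ denote the ring of integers of $\mathbb{Q}(\sqrt{D})$, let $p$ be a prime integer which is irreducible but not prime in $\mathbb{Z}[\sqrt{D}]$, let $z\in I_p(D)$ and $k=\lVert z\rVert/p$. Then $A(p,z)$ has property (CZ) if and only if the following holds, according to the case: Case 1 ($D\equiv 1\pmod 4$ and $z=\frac{z_1+z_2\sqrt{D}}{2}$ with $z_1,z_2$ odd integers): there exist integers $b_1,b_2$ such that the numbers $a_1=\frac{4p-z_1b_1+z_2b_2D}{2p}$, $a_2=\frac{z_2b_1-z_1b_2}{2p}$, $c_1=\frac{-(z_1^2+z_2^2D)b_1+2z_1z_2Db_2+4z_1p}{4p^2}$, $c_2=\frac{2z_1z_2b_1-(z_1^2+z_2^2D)b_2-4z_2p}{4p^2}$ are integers, $0=(p+k)b_1^2-(p+k)Db_2^2-2z_1b_1+2z_2b_2D+4p-4p^2$, and the elements $\frac{a_1+a_2\sqrt D}{2},\frac{b_1+b_2\sqrt D}{2},\frac{c_1+c_2\sqrt D}{2}$ lie in $\mathbb{Z}[\sqrt D]$; Case 2 ($D\equiv 1\pmod 4$ and $z=z_1+z_2\sqrt{D}$ with $z_1,z_2\in\mathbb{Z}$): there exist integers $b_1,b_2$ such that the numbers $a_1=\frac{2p-z_1b_1+z_2b_2D}{p}$, $a_2=\frac{z_2b_1-z_1b_2}{p}$, $c_1=\frac{-(z_1^2+z_2^2D)b_1+2z_1z_2Db_2+2z_1p}{p^2}$, $c_2=\frac{2z_1z_2b_1-(z_1^2+z_2^2D)b_2-2z_2p}{p^2}$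 are integers, $0=(p+k)b_1^2-(p+k)Db_2^2-4z_1b_1+4z_2b_2D+4p-4p^2$, and the elements $\frac{a_1+a_2\sqrt D}{2},\frac{b_1+b_2\sqrt D}{2},\frac{c_1+c_2\sqrt D}{2}$ lie in $\mathbb{Z}[\sqrt D]$; Case 3 ($D\equiv 2,3\pmod 4$ and $z=z_1+z_2\sqrt{D}$ with $z_1,z_2\in\mathbb{Z}$): there exist integers $b_1,b_2$ such that the numbers $a_1=\frac{p-z_1b_1+z_2b_2D}{p}$, $a_2=\frac{z_2b_1-z_1b_2}{p}$, $c_1=\frac{-(z_1^2+z_2^2D)b_1+2z_1z_2Db_2+z_1p}{p^2}$, $c_2=\frac{2z_1z_2b_1-(z_1^2+z_2^2D)b_2-z_2p}{p^2}$ are integers and $0=(p+k)b_1^2-(p+k)Db_2^2-2z_1b_1+2z_2Db_2+p-p^2$.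
   Context: $\mathbb{Z}[\sqrt{D}]=\{a+b\sqrt{D}:a,b\in\mathbb{Z}\}$ if $D\equiv 2,3 \pmod 4$ and $\{\frac{a+b\sqrt{D}}{2}:a,b\in\mathbb{Z},a\equiv b \pmod 2\}$ if $D\equiv 1\pmod 4$. $\bar z$ denotes the conjugate and $\lVert z\rVert=z\bar z$ the norm. $I_p(D)$ is the set of all non-unit $z\in\mathbb{Z}[\sqrt{D}]$ such that $z\notin\langle p\rangle$ but there exists $m\notin\langle p\rangle$ with $zm\in\langle p\rangle$ (for such $z$, $p$ divides $\lVert z\rVert$). $A(p,z)=\begin{pmatrix} p & z\\ \bar z & \lVert z\rVert/p\end{pmatrix}$. A matrix $A(p,z)$ has property (CZ) if there exist $a,b,c\in\mathbb{Z}[\sqrt{D}]$ with $a(1-a)=bc$ such that $A(p,z)=\begin{pmatrix} a&b\\ c&1-a\end{pmatrix}\begin{pmatrix}\bar a&\bar c\\ \bar b&1-\bar a\end{pmatrix}$. *)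

(* Defs.v *)
From HB Require Import structures.
From mathcomp Require Import all_boot all_order all_algebra.
Set Implicit Arguments. Unset Strict Implicit. Unset Printing Implicit Defensive.
Import Order.TTheory GRing.Theory Num.Theory.
Local Open Scope ring_scope.

(* Elements of Q(sqrt D) are represented by pairs (x, y) of rationals,
   standing for x + y * sqrt D.  The arithmetic below is that of Q(sqrt D). *)
Definition qd := (rat * rat)%type.

Definition qzero : qd := (0, 0).
Definition qone : qd := (1, 0).
Definition qint (n : int) : qd := (n%:~R, 0).
Definition qadd (u v : qd) : qd := (u.1 + v.1, u.2 + v.2).
Definition qopp (u : qd) : qd := (- u.1, - u.2).
Definition qsub (u v : qd) : qd := qadd u (qopp v).
Definition qmul (D : int) (u v : qd) : qd :=
  (u.1 * v.1 + D%:~R * u.2 * v.2, u.1 * v.2 + u.2 * v.1).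
Definition qconj (u : qd) : qd := (u.1, - u.2).
Definition qnorm (D : int) (u : qd) : rat := u.1 ^+ 2 - D%:~R * u.2 ^+ 2.

Definition squarefree_int (D : int) : Prop :=
  forall n : int, (n * n %| D)%Z -> n * n = 1.

Definition in_OD (D : int) (u : qd) : Prop :=
  if (D %% 4)%Z == 1 then
    exists m n : int, u = (m%:~R / 2, n%:~R / 2) /\ (2 %| m - n)%Z
  else exists m n : int, u = (m%:~R, n%:~R).

Definition qdvd (D : int) (a b : qd) : Prop :=
  exists c, in_OD D c /\ b = qmul D a c.
Definition in_ideal (D : int) (p u : qd) : Prop := qdvd D p u.

Definition qunit (D : int) (u : qd) : Prop :=
  in_OD D u /\ exists v, in_OD D v /\ qmul D u v = qone.

Definition irreducible_OD (D : int) (u : qd) : Prop :=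
  [/\ in_OD D u, u <> qzero, ~ qunit D u &
      forall x y, in_OD D x -> in_OD D y -> u = qmul D x y -> qunit D x \/ qunit D y].

Definition prime_OD (D : int) (u : qd) : Prop :=
  [/\ in_OD D u, u <> qzero, ~ qunit D u &
      forall x y, in_OD D x -> in_OD D y -> qdvd D u (qmul D x y) ->
        qdvd D u x \/ qdvd D u y].

Definition Ip (D : int) (p : qd) (z : qd) : Prop :=
  [/\ in_OD D z, ~ qunit D z, ~ in_ideal D p z &
      exists m, [/\ in_OD D m, ~ in_ideal D p m & in_ideal D p (qmul D z m)]].

Record M2 := mkM2 { m11 : qd; m12 : qd; m21 : qd; m22 : qd }.

Definition mulM2 (D : int) (A B : M2) : M2 :=
  mkM2 (qadd (qmul D (m11 A) (m11 B)) (qmul D (m12 A) (m21 B)))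
       (qadd (qmul D (m11 A) (m12 B)) (qmul D (m12 A) (m22 B)))
       (qadd (qmul D (m21 A) (m11 B)) (qmul D (m22 A) (m21 B)))
       (qadd (qmul D (m21 A) (m12 B)) (qmul D (m22 A) (m22 B))).

Definition Apz (D : int) (p : nat) (z : qd) : M2 :=
  mkM2 (qint p) z (qconj z) (qnorm D z / p%:R, 0).

Definition CZ (D : int) (p : nat) (z : qd) : Prop :=
  exists a b c : qd,
    [/\ in_OD D a, in_OD D b, in_OD D c,
        qmul D a (qsub qone a) = qmul D b c &
        Apz D p z =
          mulM2 D (mkM2 a b c (qsub qone a))
                  (mkM2 (qconj a) (qconj c) (qconj b) (qsub qone (qconj a)))].

(* Main.v *)
Require Import Defs.
From mathcomp Require Import all_boot all_order all_algebra ring.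
Import Order.TTheory GRing.Theory Num.Theory.
Local Open Scope ring_scope.

Definition aof (D : int) (q : rat) (z b : qd) : qd :=
  (1 - (z.1 * b.1 - D%:~R * z.2 * b.2) / q, (z.2 * b.1 - z.1 * b.2) / q).
Definition cof (D : int) (q : rat) (z a : qd) : qd :=
  ((z.1 * a.1 - D%:~R * z.2 * a.2) / q, (z.1 * a.2 - z.2 * a.1) / q).
Definition quad (D : int) (q : rat) (z b : qd) : rat :=
  (q + qnorm D z / q) * (b.1 ^+ 2 - D%:~R * b.2 ^+ 2)
  - 2 * (z.1 * b.1 - D%:~R * z.2 * b.2) + q - q ^+ 2.

Lemma useN (x E N q : rat) : q != 0 -> N = q -> E = x * N / q -> x = E.
Proof. by move=> qn -> ->; rewrite mulfK. Qed.

Lemma key D (p : nat) z : (0 < p)%N ->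
  CZ D p z <-> exists b, [/\ in_OD D b, in_OD D (aof D p%:R z b),
     in_OD D (cof D p%:R z (aof D p%:R z b)) & quad D p%:R z b = 0].
Proof.
move=> p0; have qn : (p%:R : rat) != 0 by rewrite pnatr_eq0 -lt0n.
have pq : (p%:~R : rat) = p%:R by [].
case: z => z1 z2; split.
- move=> [[a1 a2] [[b1 b2] [[c1 c2] [Ha Hb Hc E0 EM]]]].
  move: E0 EM; rewrite /qmul /qsub /qadd /qopp /qone /Apz /mulM2 /qint /qconj /qnorm /= pq.
  case=> e1 e2 [] f11 f12 f21 f22 f31 f32 f41 f42.
  set q := (p%:R : rat) in qn f11 f41 *.
  set d := (D%:~R : rat) in e1 e2 f11 f12 f21 f22 f31 f32 f41 f42 *.
  clearbody q.
  have hq : q = a1^+2 - d*a2^+2 + b1^+2 - d*b2^+2 by rewrite {1}f11; ring.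
  have hz1 : z1 = a1*c1 - d*a2*c2 + b1*(1-a1) + d*b2*a2 by rewrite {1}f21; ring.
  have hz2 : z2 = -a1*c2 + a2*c1 + b1*a2 + b2*(1-a1) by rewrite {1}f22; ring.
  have E1 : a1 * (1 - a1) + d * a2 * (0 - a2) - (b1 * c1 + d * b2 * c2) = 0 by rewrite e1 subrr.
  have E2 : a1 * (0 - a2) + a2 * (1 - a1) - (b1 * c2 + b2 * c1) = 0 by rewrite e2 subrr.
  have A1 : q*a1 - (q - (z1*b1 - d*z2*b2)) =
     -(a1 * (a1 * (1 - a1) + d * a2 * (0 - a2) - (b1 * c1 + d * b2 * c2))
      - d * a2 * (a1 * (0 - a2) + a2 * (1 - a1) - (b1 * c2 + b2 * c1))).
    by rewrite hz1 hz2 {1 2}hq; ring.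
  rewrite E1 E2 !mulr0 subrr oppr0 in A1.
  have A2 : q*a2 - (z2*b1 - z1*b2) =
     -(a1 * (a1 * (0 - a2) + a2 * (1 - a1) - (b1 * c2 + b2 * c1))
      - a2 * (a1 * (1 - a1) + d * a2 * (0 - a2) - (b1 * c1 + d * b2 * c2))).
    by rewrite hz1 hz2 {1}hq; ring.
  rewrite E1 E2 !mulr0 subrr oppr0 in A2.
  have C1 : (z1*a1 - d*z2*a2) - q*c1 =
     (b1 * (a1 * (1 - a1) + d * a2 * (0 - a2) - (b1 * c1 + d * b2 * c2))
      - d * b2 * (a1 * (0 - a2) + a2 * (1 - a1) - (b1 * c2 + b2 * c1))).
    by rewrite hz1 hz2 {1}hq; ring.
  rewrite E1 E2 !mulr0 subrr in C1.
  have C2 : (z1*a2 - z2*a1) - q*c2 =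
     (b1 * (a1 * (0 - a2) + a2 * (1 - a1) - (b1 * c2 + b2 * c1))
      - b2 * (a1 * (1 - a1) + d * a2 * (0 - a2) - (b1 * c1 + d * b2 * c2))).
    by rewrite hz1 hz2 {1}hq; ring.
  rewrite E1 E2 !mulr0 subrr in C2.
  move/eqP: A1; rewrite subr_eq0 => /eqP A1.
  move/eqP: A2; rewrite subr_eq0 => /eqP A2.
  move/eqP: C1; rewrite subr_eq0 => /eqP C1.
  move/eqP: C2; rewrite subr_eq0 => /eqP C2.
  have a1E : a1 = 1 - (z1*b1 - d*z2*b2)/q.
    by rewrite -[a1](mulKf qn) A1; field.
  have a2E : a2 = (z2*b1 - z1*b2)/q by rewrite -[a2](mulKf qn) A2 mulrC.
  have aE : aof D q (z1, z2) (b1, b2) = (a1, a2) by rewrite /aof /= -/d -a1E -a2E.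
  have cE : cof D q (z1, z2) (a1, a2) = (c1, c2).
    by rewrite /cof /= -/d C1 C2 !(mulrC q) !mulfK.
  exists (b1, b2); rewrite aE cE; split => //.
  rewrite /quad /qnorm /= -/d.
  have -> : (q + (z1 ^+ 2 - d * z2 ^+ 2) / q) * (b1 ^+ 2 - d * b2 ^+ 2) -
      2 * (z1 * b1 - d * z2 * b2) + q - q ^+ 2 =
      q * (a1^+2 - d*a2^+2 + b1^+2 - d*b2^+2 - q).
    rewrite a1E a2E; by field.
  by rewrite -hq subrr mulr0.
- case=> [[b1 b2] [Hb Ha Hc Hq]].
  exists (aof D p%:R (z1, z2) (b1, b2)), (b1, b2),
     (cof D p%:R (z1, z2) (aof D p%:R (z1, z2) (b1, b2))); split => //.
  + rewrite /qmul /qsub /qadd /qopp /qone /aof /cof /=; congr pair; by field.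
  move: Hq; rewrite /quad /Apz /mulM2 /qmul /qsub /qadd /qopp /qone /aof /cof /qint /qconj /qnorm /= pq.
  set q := (p%:R : rat) in qn *.
  set d := (D%:~R : rat).
  set N := (1 - (z1 * b1 - d * z2 * b2) / q)^+2 - d * ((z2 * b1 - z1 * b2) / q)^+2
          + b1^+2 - d * b2^+2.
  move=> Hq.
  have HN : N = q.
    apply/eqP; rewrite -subr_eq0; apply/eqP.
    apply: (mulfI qn); rewrite mulr0 -[RHS]Hq /N; by field.
  congr mkM2; congr pair. all: eapply (@useN _ _ N q qn HN); rewrite /N; by field.
Qed.

Lemma in_OD_eq D u v : in_OD D u -> u = v -> in_OD D v.
Proof. by move=> h <-. Qed.

Lemma zero_of (Q E c : rat) : Q = 0 -> E = c * Q -> 0 = E.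
Proof. by move=> -> ->; rewrite mulr0. Qed.

Lemma zero_of2 (Q E c : rat) : 0 = E -> c != 0 -> Q = c^-1 * E -> Q = 0.
Proof. by move=> <- _ ->; rewrite mulr0. Qed.

Theorem theorem3p2 (D : int) (p : nat) (z : qd) :
  squarefree_int D -> D != 1 -> prime p ->
  irreducible_OD D (qint p) -> ~ prime_OD D (qint p) ->
  Ip D (qint p) z ->
  let k : rat := qnorm D z / p%:R in
  let d : rat := D%:~R in
  let q : rat := p%:R in
  [/\
   (* Case 1 *)
   ((D %% 4)%Z = 1 ->
   forall z1 z2 : int, ~~ (2 %| z1)%Z -> ~~ (2 %| z2)%Z ->
   z = (z1%:~R / 2, z2%:~R / 2) ->
   let x1 : rat := z1%:~R in let x2 : rat := z2%:~R in
   (CZ D p z <->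
    exists b1 b2 : int,
      let y1 : rat := b1%:~R in let y2 : rat := b2%:~R in
      let a1 := (4 * q - x1 * y1 + x2 * y2 * d) / (2 * q) in
      let a2 := (x2 * y1 - x1 * y2) / (2 * q) in
      let c1 := (- (x1 ^+ 2 + x2 ^+ 2 * d) * y1 + 2 * x1 * x2 * d * y2 + 4 * x1 * q)
                / (4 * q ^+ 2) in
      let c2 := (2 * x1 * x2 * y1 - (x1 ^+ 2 + x2 ^+ 2 * d) * y2 - 4 * x2 * q)
                / (4 * q ^+ 2) in
      [/\ [/\ a1 \is a Num.int, a2 \is a Num.int, c1 \is a Num.int & c2 \is a Num.int],
          0 = (q + k) * y1 ^+ 2 - (q + k) * d * y2 ^+ 2 - 2 * x1 * y1
              + 2 * x2 * y2 * d + 4 * q - 4 * q ^+ 2 &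
          [/\ in_OD D (a1 / 2, a2 / 2), in_OD D (y1 / 2, y2 / 2)
            & in_OD D (c1 / 2, c2 / 2)]])),
   (* Case 2 *)
   ((D %% 4)%Z = 1 ->
   forall z1 z2 : int, z = (z1%:~R, z2%:~R) ->
   let x1 : rat := z1%:~R in let x2 : rat := z2%:~R in
   (CZ D p z <->
    exists b1 b2 : int,
      let y1 : rat := b1%:~R in let y2 : rat := b2%:~R in
      let a1 := (2 * q - x1 * y1 + x2 * y2 * d) / q in
      let a2 := (x2 * y1 - x1 * y2) / q in
      let c1 := (- (x1 ^+ 2 + x2 ^+ 2 * d) * y1 + 2 * x1 * x2 * d * y2 + 2 * x1 * q)
                / (q ^+ 2) in
      let c2 := (2 * x1 * x2 * y1 - (x1 ^+ 2 + x2 ^+ 2 * d) * y2 - 2 * x2 * q)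
                / (q ^+ 2) in
      [/\ [/\ a1 \is a Num.int, a2 \is a Num.int, c1 \is a Num.int & c2 \is a Num.int],
          0 = (q + k) * y1 ^+ 2 - (q + k) * d * y2 ^+ 2 - 4 * x1 * y1
              + 4 * x2 * y2 * d + 4 * q - 4 * q ^+ 2 &
          [/\ in_OD D (a1 / 2, a2 / 2), in_OD D (y1 / 2, y2 / 2)
            & in_OD D (c1 / 2, c2 / 2)]]))
   &
   (* Case 3 *)
   (((D %% 4)%Z = 2 \/ (D %% 4)%Z = 3) ->
   forall z1 z2 : int, z = (z1%:~R, z2%:~R) ->
   let x1 : rat := z1%:~R in let x2 : rat := z2%:~R in
   (CZ D p z <->
    exists b1 b2 : int,
      let y1 : rat := b1%:~R in let y2 : rat := b2%:~R in
      let a1 := (q - x1 * y1 + x2 * y2 * d) / q in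
      let a2 := (x2 * y1 - x1 * y2) / q in
      let c1 := (- (x1 ^+ 2 + x2 ^+ 2 * d) * y1 + 2 * x1 * x2 * d * y2 + x1 * q)
                / (q ^+ 2) in
      let c2 := (2 * x1 * x2 * y1 - (x1 ^+ 2 + x2 ^+ 2 * d) * y2 - x2 * q)
                / (q ^+ 2) in
      [/\ [/\ a1 \is a Num.int, a2 \is a Num.int, c1 \is a Num.int & c2 \is a Num.int] &
          0 = (q + k) * y1 ^+ 2 - (q + k) * d * y2 ^+ 2 - 2 * x1 * y1
              + 2 * x2 * d * y2 + q - q ^+ 2]))].
Proof.
move=> _ _ pp _ _ _; cbv zeta.
have p0 := prime_gt0 pp.
have qn : (p%:R : rat) != 0 by rewrite pnatr_eq0 -lt0n.
split.
- move=> HD z1 z2 _ _ ->; rewrite key //.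
  have HD' : ((D %% 4)%Z == 1) = true by rewrite HD.
  split.
  + case=> [[u v] [Hb Ha Hc Hq]].
    move: (Hb); rewrite /in_OD HD' /= => [[m [n [[hu hv] Hmn]]]]; subst u v.
    move: Ha; rewrite /in_OD HD' /aof /= => [[m1 [n1 [[h1 h2] Hp1]]]].
    move: Hc; rewrite /in_OD HD' /cof /aof /= => [[m2 [n2 [[h3 h4] Hp2]]]].
    exists m, n; split.
    * split; apply/intrP.
      - by exists m1; rewrite -[m1%:~R](@divfK _ 2) // -h1; field.
      - by exists n1; rewrite -[n1%:~R](@divfK _ 2) // -h2; field.
      - by exists m2; rewrite -[m2%:~R](@divfK _ 2) // -h3; field.
      - by exists n2; rewrite -[n2%:~R](@divfK _ 2) // -h4; field.
    * move: Hq; rewrite /quad /qnorm /= => Hq.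
      apply: (@zero_of _ _ 4 Hq); by field.
    * split.
      - by exists m1, n1; split => //; congr pair; [rewrite -h1 | rewrite -h2]; field.
      - by exists m, n.
      - by exists m2, n2; split => //; congr pair; [rewrite -h3 | rewrite -h4]; field.
  + case=> b1 [b2 [_ Hq [Ha Hb Hc]]].
    exists (b1%:~R / 2, b2%:~R / 2); split => //.
    * by apply: (@in_OD_eq _ _ _ Ha); rewrite /aof /=; congr pair; field.
    * by apply: (@in_OD_eq _ _ _ Hc); rewrite /cof /aof /=; congr pair; field.
    * move: Hq; rewrite /quad /qnorm /= => Hq; apply: (@zero_of2 _ _ 4 Hq) => //; by field.
- move=> HD z1 z2 ->; rewrite key //.
  have HD' : ((D %% 4)%Z == 1) = true by rewrite HD.
  split.
  + case=> [[u v] [Hb Ha Hc Hq]].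
    move: (Hb); rewrite /in_OD HD' /= => [[m [n [[hu hv] Hmn]]]]; subst u v.
    move: Ha; rewrite /in_OD HD' /aof /= => [[m1 [n1 [[h1 h2] Hp1]]]].
    move: Hc; rewrite /in_OD HD' /cof /aof /= => [[m2 [n2 [[h3 h4] Hp2]]]].
    exists m, n; split.
    * split; apply/intrP.
      - by exists m1; rewrite -[m1%:~R](@divfK _ 2) // -h1; field.
      - by exists n1; rewrite -[n1%:~R](@divfK _ 2) // -h2; field.
      - by exists m2; rewrite -[m2%:~R](@divfK _ 2) // -h3; field.
      - by exists n2; rewrite -[n2%:~R](@divfK _ 2) // -h4; field.
    * move: Hq; rewrite /quad /qnorm /= => Hq.
      apply: (@zero_of _ _ 4 Hq); by field.
    * split.
      - by exists m1, n1; split => //; congr pair; [rewrite -h1 | rewrite -h2]; field.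
      - by exists m, n.
      - by exists m2, n2; split => //; congr pair; [rewrite -h3 | rewrite -h4]; field.
  + case=> b1 [b2 [_ Hq [Ha Hb Hc]]].
    exists (b1%:~R / 2, b2%:~R / 2); split => //.
    * by apply: (@in_OD_eq _ _ _ Ha); rewrite /aof /=; congr pair; field.
    * by apply: (@in_OD_eq _ _ _ Hc); rewrite /cof /aof /=; congr pair; field.
    * move: Hq; rewrite /quad /qnorm /= => Hq; apply: (@zero_of2 _ _ 4 Hq) => //; by field.
- move=> HD z1 z2 ->; rewrite key //.
  have HD' : ((D %% 4)%Z == 1) = false by case: HD => ->.
  split.
  + case=> [[u v] [Hb Ha Hc Hq]].
    move: (Hb); rewrite /in_OD HD' /= => [[m [n [hu hv]]]]; subst u v.
    move: Ha; rewrite /in_OD HD' /aof /= => [[m1 [n1 [h1 h2]]]].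
    move: Hc; rewrite /in_OD HD' /cof /aof /= => [[m2 [n2 [h3 h4]]]].
    exists m, n; split.
    * split; apply/intrP.
      - by exists m1; rewrite -h1; field.
      - by exists n1; rewrite -h2; field.
      - by exists m2; rewrite -h3; field.
      - by exists n2; rewrite -h4; field.
    * move: Hq; rewrite /quad /qnorm /= => Hq.
      apply: (@zero_of _ _ 1 Hq); by field.
  + case=> b1 [b2 [[/intrP[m1 h1] /intrP[n1 h2] /intrP[m2 h3] /intrP[n2 h4]] Hq]].
    exists (b1%:~R, b2%:~R); split => //.
    * by rewrite /in_OD HD'; exists b1, b2.
    * rewrite /in_OD HD'; exists m1, n1; rewrite /aof /=.
      by congr pair; [rewrite -h1 | rewrite -h2]; field.
    * rewrite /in_OD HD'; exists m2, n2; rewrite /cof /aof /=.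
      by congr pair; [rewrite -h3 | rewrite -h4]; field.
    * move: Hq; rewrite /quad /qnorm /= => Hq; apply: (@zero_of2 _ _ 1 Hq) => //; by field.
Qed.
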